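(* Let $G$ be a countable discrete amenable group, $l:G\to[0,\infty)$ a proper length function, and $\sigma\in Z^2(G,\mathbb{T})$. Let $L=L_{\partial_l\times\partial_l}$ be the Lipschitz seminorm on $C^*_r(G,\sigma)\otimes_{\min}C^*_r(G,\sigma)^{\mathrm{op}}$ of the exterior product of the odd spectral triples $(C^*_r(G,\sigma),\ell^2(G),\partial_l)$ and $(C^*_r(G,\sigma)^{\mathrm{op}},\ell^2(G),\partial_l)$. Then for all $\phi_1,\phi_2,\phi_3,\phi_4\in P_1(G)$, $$\Delta^{\min}_{\tau_\sigma,L}(M_{\phi_1}\circ M_{\phi_2},M_{\phi_3}\circ M_{\phi_4})\le\Delta^{\min}_{\tau_\sigma,L}(M_{\phi_1},M_{\phi_3})+\Delta^{\min}_{\tau_\sigma,L}(M_{\phi_2},M_{\phi_4}).$$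
   Context: $Z^2(G,\mathbb{T})$ is the set of normalized 2-cocycles. $C_c(G,\sigma)$ is the $*$-algebra of finitely supported functions with twisted convolution $(f_1*_\sigma f_2)(x)=\sum_y f_1(y)f_2(y^{-1}x)\sigma(y,y^{-1}x)$ and involution $f^*(x)=\overline{\sigma(x,x^{-1})}\,\overline{f(x^{-1})}$. $\lambda^\sigma(f)\xi(x)=\sum_y f(y)\xi(y^{-1}x)\sigma(y,y^{-1}x)$ on $\ell^2(G)$, $\lambda^\sigma_g=\lambda^\sigma(\delta_g)$, and $C^*_r(G,\sigma)$ is the norm closure of $\lambda^\sigma(C_c(G,\sigma))$; $\tau_\sigma$ is the faithful tracial state with $\tau_\sigma(\lambda^\sigma(f))=f(1_G)$ (it is amenable since $G$ is amenable). $B^{\mathrm{op}}$ is the opposite $C^*$-algebra (same Banach space and involution, product $b^{\mathrm{op}}c^{\mathrm{op}}=(cb)^{\mathrm{op}}$); $C^*_r(G,\sigma)^{\mathrm{op}}$ is faithfully represented on $\ell^2(G)$ via $\lambda^\sigma(f)^{\mathrm{op}}\mapsto\rho^\sigma(f)$, where $\rho^\sigma(f)\xi(x)=\sum_y\xi(y)f(y^{-1}x)\sigma(y,y^{-1}x)$. A length function $l$ satisfies $l(1_G)=0$, $l(s^{-1})=l(s)$, $l(st)\le l(s)+l(t)$; it is proper if $l^{-1}([0,r])$ is finite for all $r$. $\partial_l$ is the closure of $\delta_s\mapsto l(s)\delta_s$ on $C_c(G)$. The exterior product spectral triple has Hilbert space $(\ell^2(G)\otimes\ell^2(G))^{\oplus2}$,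 with $C^*_r(G,\sigma)\otimes_{\min}C^*_r(G,\sigma)^{\mathrm{op}}$ acting diagonally through $\lambda^\sigma\otimes\rho^\sigma$, and operator $\partial_l\times\partial_l$ the closure of $\begin{pmatrix}0&\partial_l\otimes1+i\,1\otimes\partial_l\\ \partial_l\otimes1-i\,1\otimes\partial_l&0\end{pmatrix}$; $L(x)=\|[\partial_l\times\partial_l,x]\|$ for $x$ in the algebraic tensor product $\lambda^\sigma(C_c(G,\sigma))\odot\lambda^\sigma(C_c(G,\sigma))^{\mathrm{op}}$, and $L(x)=\infty$ otherwise. $P_1(G)$ is the set of positive definite functions $\phi$ on $G$ with $\phi(1_G)=1$; for such $\phi$, $M_\phi$ is the unital completely positive map on $C^*_r(G,\sigma)$ with $M_\phi(\lambda^\sigma_g)=\phi(g)\lambda^\sigma_g$. For a trace $\tau$ on unital $B$ and completely positive $F:A\to B$, $\omega^{\min}_\tau(F)$ is the continuous extension to $A\otimes_{\min}B^{\mathrm{op}}$ of $a\otimes b^{\mathrm{op}}\mapsto\tau(F(a)b)$ (existing for amenable $\tau$). For a seminorm $L$, $\mathrm{mk}_L(\varphi,\psi)=\sup\{|\varphi(x)-\psi(x)|:L(x)\le1\}$, and $\Delta^{\min}_{\tau,L}(F,G)=\mathrm{mk}_L(\omega^{\min}_\tau(F),\omega^{\min}_\tau(G))$ for trace channels $F,G$ (completely positive with $\tau(F(1))=1$). *)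

(* Defs.v *)
From HB Require Import structures.
From mathcomp Require Import all_boot all_order all_algebra.
From mathcomp Require Import all_classical all_reals ereal.
From mathcomp Require Import complex.
Set Implicit Arguments.
Unset Strict Implicit.
Unset Printing Implicit Defensive.
Import Order.TTheory GRing.Theory Num.Theory.
Local Open Scope classical_set_scope.
Local Open Scope ring_scope.

Section TwistedGroupAlgebra.
Variable R : realType.
Variable G : groupType.
Local Notation C := (R[i]).

Definition cabs (z : C) : R := complex.Re `|z|.

Definition countable_group : Prop := exists f : G -> nat, injective f.

Definition bounded_fun (f : G -> R) : Prop := exists M : R, forall x, `|f x| <= M.

Definition amenable_group : Prop :=
  exists m : (G -> R) -> R,
    [/\ (forall f g, bounded_fun f -> bounded_fun g -> m (f \+ g) = m f + m g),
        (forall (a : R) f, bounded_fun f -> m (fun x => a * f x) = a * m f),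
        (forall f, bounded_fun f -> (forall x, 0 <= f x) -> 0 <= m f),
        m (fun _ => 1) = 1 &
        (forall f (s : G), bounded_fun f -> m (fun x => f (s^-1 * x)%g) = m f)].

Definition length_function (l : G -> R) : Prop :=
  [/\ (forall s, 0 <= l s), l 1%g = 0,
      (forall s, l (s^-1)%g = l s) &
      (forall s t, l (s * t)%g <= l s + l t)].

Definition proper_length (l : G -> R) : Prop :=
  forall r : R, finite_set [set s | l s <= r].

Definition normalized_2cocycle (sigma : G -> G -> C) : Prop :=
  [/\ (forall x y, cabs (sigma x y) = 1),
      (forall x y z, sigma x y * sigma (x * y)%g z = sigma x (y * z)%g * sigma y z),
      (forall x, sigma 1%g x = 1) &
      (forall x, sigma x 1%g = 1)].

Definition positive_definite (phi : G -> C) : Prop :=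
  forall (n : nat) (x : 'I_n -> G) (c : 'I_n -> C),
    0 <= \sum_(i < n) \sum_(j < n) (c i)^* * c j * phi ((x i)^-1 * x j)%g.

Definition P1 (phi : G -> C) : Prop := positive_definite phi /\ phi 1%g = 1.

Definition fin_supp (T : Type) (f : T -> C) : Prop := finite_set [set x | f x != 0].

Variable sigma : G -> G -> C.

Definition tconv (f1 f2 : G -> C) : G -> C :=
  fun x => \sum_(y \in [set: G]) f1 y * f2 (y^-1 * x)%g * sigma y (y^-1 * x)%g.

(* tau_sigma (lambda^sigma(f)) = f(1) *)
Definition tau (f : G -> C) : C := f 1%g.

(* M_phi on lambda^sigma(C_c(G,sigma)) : lambda(f) |-> lambda(phi f) *)
Definition Mphi (phi : G -> C) (f : G -> C) : G -> C := fun g => phi g * f g.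

(* finitely supported vectors of l^2(G) (x) l^2(G) = l^2(G x G) *)
Definition vec := (G * G)%type -> C.

(* lambda^sigma(f) (x) 1 *)
Definition lam1 (f : G -> C) (xi : vec) : vec :=
  fun p => \sum_(y \in [set: G]) f y * xi ((y^-1 * p.1)%g, p.2) * sigma y (y^-1 * p.1)%g.

(* 1 (x) rho^sigma(g) *)
Definition rho2 (g : G -> C) (xi : vec) : vec :=
  fun p => \sum_(y \in [set: G]) xi (p.1, y) * g (y^-1 * p.2)%g * sigma y (y^-1 * p.2)%g.

(* an element of the algebraic tensor product
   lambda(C_c(G,sigma)) (.) lambda(C_c(G,sigma))^op, represented as
   sum_k lambda(f_k) (x) lambda(g_k)^op *)
Definition tens := seq ((G -> C) * (G -> C)).

Fixpoint tens_fin (x : tens) : Prop :=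
  match x with
  | [::] => True
  | fg :: x' => (fin_supp fg.1 /\ fin_supp fg.2) /\ tens_fin x'
  end.

(* action of x on l^2(G x G) through lambda^sigma (x) rho^sigma *)
Definition act (x : tens) (xi : vec) : vec :=
  fun p => \sum_(fg <- x) lam1 fg.1 (rho2 fg.2 xi) p.

(* vectors of (l^2(G) (x) l^2(G))^{(+)2} *)
Definition vec2 := (vec * vec)%type.

Definition act2 (x : tens) (v : vec2) : vec2 := (act x v.1, act x v.2).

Variable l : G -> R.

(* partial_l (x) 1 + i 1 (x) partial_l  and  partial_l (x) 1 - i 1 (x) partial_l *)
Definition Dplus (xi : vec) : vec := fun p => ((l p.1)%:C + 'i * (l p.2)%:C)%C * xi p.
Definition Dminus (xi : vec) : vec := fun p => ((l p.1)%:C - 'i * (l p.2)%:C)%C * xi p.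

(* the operator partial_l x partial_l on finitely supported vectors *)
Definition Dext (v : vec2) : vec2 := (Dplus v.2, Dminus v.1).

Definition commD (x : tens) (v : vec2) : vec2 :=
  ((Dext (act2 x v)).1 - (act2 x (Dext v)).1,
   (Dext (act2 x v)).2 - (act2 x (Dext v)).2).

Definition norm2 (v : vec2) : R :=
  Num.sqrt (\sum_(p \in [set: (G * G)%type]) (cabs (v.1 p) ^+ 2 + cabs (v.2 p) ^+ 2)).

Definition fin_vec2 (v : vec2) : Prop := fin_supp v.1 /\ fin_supp v.2.

(* Lipschitz seminorm L(x) = || [partial_l x partial_l, x] ||, computed on the
   core of finitely supported vectors; L = +oo outside the algebraic tensor
   product (i.e. such x are never in the unit ball of L). *)
Definition Lip (x : tens) : \bar R :=
  ereal_sup [set (norm2 (commD x v))%:E | v in [set v | fin_vec2 v /\ norm2 v <= 1]].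

(* omega^min_tau(F) evaluated on x = sum_k lambda(f_k) (x) lambda(g_k)^op *)
Definition omega (F : (G -> C) -> (G -> C)) (x : tens) : C :=
  \sum_(fg <- x) tau (tconv (F fg.1) fg.2).

(* Delta^min_{tau,L}(F, F') = mk_L(omega(F), omega(F')) *)
Definition Delta (F F' : (G -> C) -> (G -> C)) : \bar R :=
  ereal_sup [set (cabs (omega F x - omega F' x))%:E
            | x in [set x | tens_fin x /\ (Lip x <= 1%:E)%E]].

End TwistedGroupAlgebra.

(* Main.v *)
Require Import Defs.
From HB Require Import structures.
From mathcomp Require Import all_boot all_order all_algebra.
From mathcomp Require Import all_classical all_reals ereal.
From mathcomp Require Import complex.
From mathcomp Require Import ring lra finmap.
Set Implicit Arguments.
Unset Strict Implicit.
Unset Printing Implicit Defensive.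
Import Order.TTheory GRing.Theory Num.Theory.
Local Open Scope classical_set_scope.
Local Open Scope ring_scope.

Lemma psd_factor (C : numClosedFieldType) n (A : 'M[C]_n) :
  (forall i j, A j i = (A i j)^*) ->
  (forall c : 'I_n -> C, 0 <= \sum_i \sum_j (c i)^* * c j * A i j) ->
  exists W : 'M[C]_n, forall i j, A i j = \sum_k (W k i)^* * W k j.
Proof.
move=> hH hpos.
have herm : A \is hermsymmx.
  by apply/is_hermitianmxP; apply/matrixP => i j; rewrite !mxE /= expr0 mul1r hH ?conjCK.
have /orthomx_spectralP eA := hermitian_normalmx herm.
set P := spectralmx A in eA; set d := spectral_diag A in eA.
have uP : P \is unitarymx := spectral_unitarymx A.
rewrite invmx_unitary // in eA.
have AE : forall i j, A i j = \sum_k (P k i)^* * d 0 k * P k j.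
  move=> i j; rewrite {1}eA mxE; apply: eq_bigr => k _.
  by rewrite mul_mx_diag !mxE.
have PAP : P *m A *m (P ^t*)%sesqui = diag_mx d.
  rewrite eA !mulmxA (unitarymxP uP) mul1mx -mulmxA (unitarymxP uP) mulmx1 //.
have d0 : forall k, 0 <= d 0 k.
  move=> k; have := congr1 (fun M : 'M[C]_n => M k k) PAP; rewrite /= [in RHS]mxE eqxx mulr1n => <-.
  have := hpos (fun i => (P k i)^*).
  rewrite !mxE => H; apply: le_trans H _; rewrite le_eqVlt; apply/orP; left; apply/eqP.
  rewrite exchange_big; apply: eq_bigr => j _; rewrite !mxE mulr_suml.
  by apply: eq_bigr => i _; rewrite conjCK; ring.
exists (\matrix_(k, j) (sqrtC (d 0 k) * P k j)) => i j.
rewrite AE; apply: eq_bigr => k _; rewrite !mxE rmorphM /=.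
have sr : (sqrtC (d 0 k))^* = sqrtC (d 0 k).
  by apply: conj_Creal; apply: ger0_real; rewrite sqrtC_ge0.
rewrite sr -{1}(sqrtCK (d 0 k)) expr2; ring.
Qed.

Section Cabs.
Variable R : realType.
Local Notation C := (R[i]).

Lemma cabsE (z : C) : `|z| = ((cabs z)%:C)%C.
Proof. by rewrite /cabs normc_def /=. Qed.

Lemma cabs_ge0 (z : C) : 0 <= cabs z.
Proof. by rewrite -ler0c -cabsE. Qed.

Lemma cabsM (a b : C) : cabs (a * b) = cabs a * cabs b.
Proof. by apply: (@complexI R); rewrite rmorphM /= -!cabsE normrM. Qed.

Lemma cabsD (a b : C) : cabs (a + b) <= cabs a + cabs b.
Proof. by rewrite -lecR rmorphD /= -!cabsE ler_normD. Qed.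

Lemma cabs_sum n (F : 'I_n -> C) : cabs (\sum_i F i) <= \sum_i cabs (F i).
Proof.
rewrite -lecR -cabsE rmorph_sum; apply: le_trans (ler_norm_sum _ _ _) _.
by rewrite le_eqVlt; apply/orP; left; apply/eqP; apply: eq_bigr => i _; exact: cabsE.
Qed.

Lemma cabs_sq (z : C) : (((cabs z) ^+ 2)%:C)%C = z * z^*.
Proof. by rewrite rmorphXn /= -cabsE normCK. Qed.

Lemma cabs0 : cabs (0 : C) = 0.
Proof. by apply: (@complexI R); rewrite -cabsE normr0. Qed.

Lemma cabs_real (c : R) : cabs ((c%:C)%C) = `|c|.
Proof. by rewrite /cabs normc_def /= [0 ^+ 2]expr2 mul0r addr0 sqrtr_sqr. Qed.

Lemma cabs_eq0 (z : C) : (cabs z == 0) = (z == 0).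
Proof. by rewrite -[z == 0]normr_eq0 cabsE (inj_eq (@complexI R)). Qed.

Lemma cs_bound n (a z : 'I_n -> C) : \sum_k cabs (a k) ^+ 2 <= 1 ->
  cabs (\sum_k a k * z k) ^+ 2 <= \sum_k cabs (z k) ^+ 2.
Proof.
move=> hA.
set S := \sum_k cabs (a k) * cabs (z k).
set A := \sum_k cabs (a k) ^+ 2.
set B := \sum_k cabs (z k) ^+ 2.
have h1 : cabs (\sum_k a k * z k) <= S.
  apply: le_trans (cabs_sum _) _; rewrite le_eqVlt; apply/orP; left; apply/eqP.
  by apply: eq_bigr => k _; rewrite cabsM.
have h0 : 0 <= cabs (\sum_k a k * z k) := cabs_ge0 _.
have hpos : 0 <= \sum_k (S * cabs (a k) - cabs (z k)) ^+ 2.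
  by apply: sumr_ge0 => k _; exact: sqr_ge0.
have eq : \sum_k (S * cabs (a k) - cabs (z k)) ^+ 2 = S ^+ 2 * A - 2 * S * S + B.
  rewrite (eq_bigr (fun k => S ^+ 2 * cabs (a k) ^+ 2 + (- (2 * S) * (cabs (a k) * cabs (z k)))
     + cabs (z k) ^+ 2)); last by move=> k _; ring.
  rewrite !big_split /= -!mulr_sumr /A /B /S; ring.
have hA0 : 0 <= A by apply: sumr_ge0 => k _; exact: sqr_ge0.
have hSA : S ^+ 2 * A <= S ^+ 2 by rewrite -[leRHS]mulr1; apply: ler_wpM2l => //; exact: sqr_ge0.
rewrite eq in hpos.
have hS2 : S ^+ 2 <= B by rewrite !expr2 in hSA hpos *; lra.
apply: le_trans hS2; rewrite !expr2; nra.
Qed.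
End Cabs.

Lemma fs_out (T : choiceType) (A : set T) (fA : finite_set A) x :
  x \notin fset_set A -> ~ A x.
Proof. by rewrite in_fset_set // => /negP H Ax; apply: H; exact: mem_set. Qed.

Lemma fs_in (T : choiceType) (A : set T) (fA : finite_set A) x :
  A x -> x \in fset_set A.
Proof. by move=> Ax; rewrite in_fset_set //; exact: mem_set. Qed.

Section Main.
Variable R : realType.
Variable G : groupType.
Local Notation C := (R[i]).
Variable sigma : G -> G -> C.
Variable l : G -> R.
Local Notation vec := (vec R G).
Local Notation tens := (tens R G).

Definition smul (b : G -> C) (xi : vec) : vec := fun p => b p.1 * xi p.
Definition smul2 (b : G -> C) (v : vec2 R G) : vec2 R G := (smul b v.1, smul b v.2).
Definition xt (phi : G -> C) (x : tens) : tens := map (fun fg => (Mphi phi fg.1, fg.2)) x.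

Fixpoint tall (P : (G -> C) * (G -> C) -> Prop) (x : tens) : Prop :=
  match x with [::] => True | fg :: x' => P fg /\ tall P x' end.

Lemma rho2_smul g b xi p : rho2 sigma g (smul b xi) p = b p.1 * rho2 sigma g xi p.
Proof. by rewrite /rho2 mulr_fsumr; apply: eq_fsbigr => y _; rewrite /smul /=; ring. Qed.

Lemma lam1_scale f c (eta : vec) p :
  lam1 sigma f (fun q => c * eta q) p = c * lam1 sigma f eta p.
Proof. by rewrite /lam1 mulr_fsumr; apply: eq_fsbigr => y _; ring. Qed.

Lemma act_scale x c (xi : vec) p :
  act sigma x (fun q => c * xi q) p = c * act sigma x xi p.
Proof.
rewrite /act big_distrr; apply: eq_bigr => fg _.
have -> : rho2 sigma fg.2 (fun q => c * xi q) = fun q => c * rho2 sigma fg.2 xi q.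
  by apply: funext => q; exact: (rho2_smul fg.2 (fun _ => c) xi q).
exact: lam1_scale.
Qed.

Lemma rho2_ne0 g (xi : vec) q : rho2 sigma g xi q != 0 -> exists s, xi (q.1, s) != 0.
Proof.
move=> H; apply: contra_notP (negP H) => Hn; apply/eqP; rewrite /rho2 fsbig1 // => s _.
have [->|Hs] := eqVneq (xi (q.1, s)) 0; first by rewrite !mul0r.
by exfalso; apply: Hn; exists s.
Qed.

Lemma lam1_decomp (f g : G -> C) (phi : G -> C) n (al be : 'I_n -> G -> C)
    (Q : set G) (xi : vec) :
  fin_supp f ->
  (forall q, xi q != 0 -> Q q.1) ->
  (forall y q, f y != 0 -> Q q -> \sum_k al k (y * q)%g * be k q = phi y) ->
  forall p, lam1 sigma (Mphi phi f) (rho2 sigma g xi) p =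
            \sum_k al k p.1 * lam1 sigma f (rho2 sigma g (smul (be k) xi)) p.
Proof.
move=> ff hQ hfac p.
set Y := fset_set [set y | f y != 0].
have hY : forall y, y \notin Y -> f y = 0.
  move=> y /(fs_out ff) /= H; apply/eqP/negPn/negP; exact: H.
set eta := rho2 sigma g xi.
have E1 : lam1 sigma (Mphi phi f) eta p =
    \sum_(y <- Y) phi y * f y * eta ((y^-1 * p.1)%g, p.2) * sigma y (y^-1 * p.1)%g.
  rewrite /lam1 (fsbigTE Y) //; last by move=> y /hY; rewrite /Mphi => ->; rewrite mulr0 !mul0r.
have E2 : forall k, lam1 sigma f (rho2 sigma g (smul (be k) xi)) p =
    \sum_(y <- Y) f y * (be k (y^-1 * p.1)%g * eta ((y^-1 * p.1)%g, p.2))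
       * sigma y (y^-1 * p.1)%g.
  move=> k; rewrite /lam1 (fsbigTE Y) /=; last by move=> y /hY ->; rewrite !mul0r.
  by apply: eq_bigr => y _; rewrite rho2_smul.
rewrite E1; under [RHS]eq_bigr => k _ do rewrite E2 big_distrr.
rewrite exchange_big /=; apply: eq_bigr => y _.
set q := (y^-1 * p.1)%g.
rewrite (eq_bigr (fun k => (al k p.1 * be k q) * (f y * eta (q, p.2) * sigma y q)));
  last by move=> k _; ring.
rewrite -mulr_suml.
have [H0|Hn0] := eqVneq (f y * eta (q, p.2)) 0.
  have -> : phi y * f y * eta (q, p.2) * sigma y q =
     phi y * (f y * eta (q, p.2)) * sigma y q by ring.
  by rewrite H0 !(mulr0, mul0r).
have fy : f y != 0 by apply: contra Hn0 => /eqP ->; rewrite mul0r.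
have ey : eta (q, p.2) != 0 by apply: contra Hn0 => /eqP ->; rewrite mulr0.
have [s hs] := rho2_ne0 ey.
have Qq : Q q by exact: (hQ _ hs).
have -> : p.1 = (y * q)%g by rewrite /q mulVKg.
by rewrite hfac //; ring.
Qed.

Lemma act_decomp x phi n (al be : 'I_n -> G -> C) (Q : set G) (xi : vec) :
  tens_fin x ->
  (forall q, xi q != 0 -> Q q.1) ->
  tall (fun fg => forall y q, fg.1 y != 0 -> Q q ->
          \sum_k al k (y * q)%g * be k q = phi y) x ->
  forall p, act sigma (xt phi x) xi p = \sum_k al k p.1 * act sigma x (smul (be k) xi) p.
Proof.
move=> + hQ; elim: x => [|fg x IH] /=.
  move=> _ _ p; rewrite /act big_nil; under eq_bigr do rewrite big_nil mulr0.
  by rewrite big1.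
move=> [[f1 f2] fx] [hfg hx] p.
rewrite /act big_cons; under [RHS]eq_bigr do rewrite big_cons mulrDr.
rewrite big_split /=; congr (_ + _).
  exact: lam1_decomp hQ hfg p.
exact: IH.
Qed.

Lemma commD1E x (v : vec2 R G) p : (commD sigma l x v).1 p =
  ((l p.1)%:C + 'i * (l p.2)%:C)%C * act sigma x v.2 p - act sigma x (Dplus l v.2) p.
Proof. by []. Qed.

Lemma commD2E x (v : vec2 R G) p : (commD sigma l x v).2 p =
  ((l p.1)%:C - 'i * (l p.2)%:C)%C * act sigma x v.1 p - act sigma x (Dminus l v.1) p.
Proof. by []. Qed.

Lemma smul_Dplus b (xi : vec) : smul b (Dplus l xi) = Dplus l (smul b xi).
Proof. by apply: funext => q; rewrite /smul /Dplus; ring. Qed.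

Lemma smul_Dminus b (xi : vec) : smul b (Dminus l xi) = Dminus l (smul b xi).
Proof. by apply: funext => q; rewrite /smul /Dminus; ring. Qed.

Lemma commD_decomp x phi n (al be : 'I_n -> G -> C) (Q : set G) (v : vec2 R G) :
  tens_fin x ->
  (forall q, v.1 q != 0 -> Q q.1) -> (forall q, v.2 q != 0 -> Q q.1) ->
  tall (fun fg => forall y q, fg.1 y != 0 -> Q q ->
          \sum_k al k (y * q)%g * be k q = phi y) x ->
  forall p,
  (commD sigma l (xt phi x) v).1 p = \sum_k al k p.1 * (commD sigma l x (smul2 (be k) v)).1 p /\
  (commD sigma l (xt phi x) v).2 p = \sum_k al k p.1 * (commD sigma l x (smul2 (be k) v)).2 p.
Proof.
move=> fx h1 h2 ht p; split.
  rewrite commD1E (act_decomp fx h2 ht) (act_decomp (xi := Dplus l v.2) fx _ ht); last first.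
    by move=> q Hq; apply: h2; apply: contra Hq; rewrite /Dplus => /eqP ->; rewrite mulr0.
  rewrite mulr_sumr -sumrB; apply: eq_bigr => k _.
  by rewrite commD1E /= smul_Dplus; ring.
rewrite commD2E (act_decomp fx h1 ht) (act_decomp (xi := Dminus l v.1) fx _ ht); last first.
  by move=> q Hq; apply: h1; apply: contra Hq; rewrite /Dminus => /eqP ->; rewrite mulr0.
rewrite mulr_sumr -sumrB; apply: eq_bigr => k _.
by rewrite commD2E /= smul_Dminus; ring.
Qed.

Definition lamS (fg : (G -> C) * (G -> C)) (A : set (G * G)) : set (G * G) :=
  [set p | exists y s, fg.1 y != 0 /\ A ((y^-1 * p.1)%g, s) /\ fg.2 (s^-1 * p.2)%g != 0].

Fixpoint actS (x : tens) (A : set (G * G)) : set (G * G) :=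
  match x with [::] => set0 | fg :: x' => lamS fg A `|` actS x' A end.

Fixpoint ys (x : tens) : set G :=
  match x with [::] => set0 | fg :: x' => [set y | fg.1 y != 0] `|` ys x' end.

Lemma lamS_fin fg A : fin_supp fg.1 -> fin_supp fg.2 -> finite_set A ->
  finite_set (lamS fg A).
Proof.
move=> f1 f2 fA.
apply: (sub_finite_set _ (finite_image
   (fun t : G * (G * G) * G => ((t.1.1 * t.1.2.1)%g, (t.1.2.2 * t.2)%g))
   (finite_setX (finite_setX f1 fA) f2))).
move=> p [y [s [hy [hA hz]]]].
exists ((y, ((y^-1 * p.1)%g, s)), (s^-1 * p.2)%g) => //=.
by rewrite !mulVKg; case: p {hA hz}.
Qed.

Lemma actS_fin x A : tens_fin x -> finite_set A -> finite_set (actS x A).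
Proof.
move=> + fA; elim: x => [|fg x IH] /=; first by move=> _; exact: finite_set0.
move=> [[f1 f2] fx]; rewrite finite_setU; split; last exact: IH.
exact: lamS_fin.
Qed.

Lemma ys_fin x : tens_fin x -> finite_set (ys x).
Proof.
elim: x => [|fg x IH] /=; first by move=> _; exact: finite_set0.
by move=> [[f1 f2] fx]; rewrite finite_setU; split; [exact: f1 | exact: IH].
Qed.

Lemma fsbig_ne0 (T : choiceType) (A : set T) (F : T -> C) :
  \sum_(i \in A) F i != 0 -> exists i, F i != 0.
Proof.
move=> H; apply: contra_notP (negP H) => Hn; apply/eqP; rewrite fsbig1 // => i _.
by have [//|Hi] := eqVneq (F i) 0; exfalso; apply: Hn; exists i.
Qed.

Lemma act_supp x A (xi : vec) : (forall q, xi q != 0 -> A q) ->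
  forall p, act sigma x xi p != 0 -> actS x A p.
Proof.
move=> hA; elim: x => [|fg x IH] p /=.
  by rewrite /act big_nil eqxx.
rewrite /act big_cons => H.
have [H0|Hn0] := eqVneq (lam1 sigma fg.1 (rho2 sigma fg.2 xi) p) 0.
  by right; apply: IH; move: H; rewrite H0 add0r.
left; have [y Hy] := fsbig_ne0 Hn0.
have fy : fg.1 y != 0 by apply: contra Hy => /eqP ->; rewrite !mul0r.
have ey : rho2 sigma fg.2 xi ((y^-1 * p.1)%g, p.2) != 0.
  by apply: contra Hy => /eqP ->; rewrite mulr0 mul0r.
have [s Hs] := fsbig_ne0 ey.
exists y, s; split => //; split.
  by apply: hA; apply: contra Hs => /eqP ->; rewrite !mul0r.
by apply: contra Hs => /eqP ->; rewrite mulr0 mul0r.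
Qed.

Definition ns (v : vec2 R G) : R :=
  \sum_(p \in [set: (G * G)%type]) (cabs (v.1 p) ^+ 2 + cabs (v.2 p) ^+ 2).

Lemma norm2_ns v : norm2 v = Num.sqrt (ns v).
Proof. by []. Qed.

Lemma ns_ge0 v : 0 <= ns v.
Proof. by apply: fsumr_ge0 => p _; apply: addr_ge0; exact: sqr_ge0. Qed.

Lemma ns_seq (v : vec2 R G) (P : {fset (G * G)}) :
  (forall p, p \notin P -> v.1 p = 0 /\ v.2 p = 0) ->
  ns v = \sum_(p <- P) (cabs (v.1 p) ^+ 2 + cabs (v.2 p) ^+ 2).
Proof.
move=> H; rewrite /ns (fsbigTE P) // => p /H [-> ->].
by rewrite cabs0 expr2 mul0r addr0.
Qed.

Lemma phi_herm (phi : G -> C) : positive_definite phi ->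
  forall g h, phi (h^-1 * g)%g = (phi (g^-1 * h)%g)^*.
Proof.
move=> Pd g h.
set x := fun i : 'I_2 => if val i == 0%N then g else h.
set A := phi (g^-1 * g)%g; set B := phi (g^-1 * h)%g; set B' := phi (h^-1 * g)%g.
set D := phi (h^-1 * h)%g.
have E : forall c0 c1 : C, 0 <= c0^* * c0 * A + c0^* * c1 * B
   + (c1^* * c0 * B' + c1^* * c1 * D).
  move=> c0 c1; have := Pd 2 x (fun i : 'I_2 => if val i == 0%N then c0 else c1).
  by rewrite !big_ord_recl !big_ord0 /= !addr0.
have re : forall z : C, 0 <= z -> z^* = z by move=> z hz; apply: conj_Creal; exact: ger0_real.
pose dd (c0 c0c c1 c1c : C) := c0 * c0c * A^* + c0 * c1c * B^* + (c1 * c0c * B'^* + c1 * c1c * D^*)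
   - (c0c * c0 * A + c0c * c1 * B + (c1c * c0 * B' + c1c * c1 * D)).
have Eq : forall c0 c1, dd c0 c0^* c1 c1^* = 0.
  move=> c0 c1; have hr := re _ (E c0 c1).
  set Qv := _ + _ in hr.
  rewrite (_ : dd c0 c0^* c1 c1^* = Qv^* - Qv); first by rewrite hr subrr.
  rewrite /dd /Qv !rmorphD !rmorphM /= !conjCK; ring.
have H10 := Eq 1 0; have H01 := Eq 0 1; have H11 := Eq 1 1; have H1i := Eq 1 'i.
rewrite ?rmorph0 ?rmorph1 ?conjCi in H10 H01 H11 H1i.
have K : 2 * (B^* - B') = dd 1 1 1 1 - dd 1 1 0 0 - dd 0 0 1 1
   + 'i * (dd 1 1 'i (- 'i) - dd 1 1 0 0 + 'i ^+ 2 * dd 0 0 1 1)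
   - ('i ^+ 2 + 1) * (- B^* + B'^* - B + B').
  by rewrite /dd; ring.
rewrite H10 H01 H11 H1i sqrCi addNr mul0r !(mulr0, subr0, addr0) in K.
move/eqP: K; rewrite mulf_eq0 pnatr_eq0 /= subr_eq0 => /eqP.
by move=> ->.
Qed.

Lemma factor (phi : G -> C) (s : seq G) : P1 phi -> exists n, exists al be : 'I_n -> G -> C,
  [/\ (forall a b, a \in s -> b \in s -> \sum_k al k a * be k b = phi (a * b^-1)%g),
      (forall a, \sum_k cabs (al k a) ^+ 2 <= 1) &
      (forall b, \sum_k cabs (be k b) ^+ 2 <= 1)].
Proof.
move=> [Pd P1one].
pose n := size s.
pose e := fun i : 'I_n => nth 1%g s i.
pose A : 'M[C]_n := \matrix_(i, j) phi (e i * (e j)^-1)%g.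
have [W hW] : exists W : 'M[C]_n, forall i j, A i j = \sum_k (W k i)^* * W k j.
  apply: psd_factor.
    move=> i j; rewrite !mxE.
    by have := phi_herm Pd (e i)^-1 (e j)^-1; rewrite !invgK.
  move=> c; have := Pd n (fun i => (e i)^-1)%g c.
  move=> H; apply: le_trans H _; rewrite le_eqVlt; apply/orP; left; apply/eqP.
  by apply: eq_bigr => i _; apply: eq_bigr => j _; rewrite mxE invgK.
pose ix a := (insub (index a s) : option 'I_n).
exists n, (fun k a => if ix a is Some i then (W k i)^* else 0),
          (fun k b => if ix b is Some j then W k j else 0).
have hix : forall a, a \in s -> exists2 i, ix a = Some i & e i = a.
  move=> a ha; rewrite /ix; case: insubP => [i _ hi|]; last by rewrite index_mem ha.
  by exists i => //; rewrite /e hi nth_index.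
have hone : forall i, \sum_k (W k i)^* * W k i = 1.
  by move=> i; rewrite -hW mxE mulgV.
split.
- move=> a b ha hb; have [i -> ei] := hix a ha; have [j -> ej] := hix b hb.
  by rewrite -hW mxE ei ej.
- move=> a; case: (ix a) => [i|]; last first.
    by rewrite big1 ?ler01 // => k _; rewrite cabs0 expr2 mul0r.
  rewrite le_eqVlt; apply/orP; left; apply/eqP; apply: (@complexI R).
  rewrite rmorph_sum /=; under eq_bigr do rewrite cabs_sq conjCK.
  by rewrite hone.
- move=> b; case: (ix b) => [j|]; last first.
    by rewrite big1 ?ler01 // => k _; rewrite cabs0 expr2 mul0r.
  rewrite le_eqVlt; apply/orP; left; apply/eqP; apply: (@complexI R).
  rewrite rmorph_sum /=; under eq_bigr do rewrite cabs_sq mulrC.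
  by rewrite hone.
Qed.

Lemma tall_ys x (Q : set G) (P' : G -> G -> Prop) :
  (forall y q, ys x y -> Q q -> P' y q) ->
  tall (fun fg => forall y q, fg.1 y != 0 -> Q q -> P' y q) x.
Proof.
elim: x => [|fg x IH] //= H; split.
  by move=> y q fy Qq; apply: H => //; left.
by apply: IH => y q yx Qq; apply: H => //; right.
Qed.

Lemma key x phi (v : vec2 R G) : tens_fin x -> P1 phi -> fin_vec2 v ->
  (forall w, fin_vec2 w -> ns (commD sigma l x w) <= ns w) ->
  ns (commD sigma l (xt phi x) v) <= ns v.
Proof.
move=> fx Pphi [fv1 fv2] Hx.
set D0 := [set p | v.1 p != 0 \/ v.2 p != 0].
have fD0 : finite_set D0.
  have := conj fv1 fv2; rewrite -finite_setU; apply: sub_finite_set.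
  by move=> p [H|H]; [left|right].
set Q := [set a | exists t, D0 (a, t)].
have fQ : finite_set Q.
  apply: (sub_finite_set _ (finite_image fst fD0)).
  by move=> a [t Ht]; exists (a, t).
set TT := Q `|` [set (t.1 * t.2)%g | t in ys x `*` Q].
have fTT : finite_set TT.
  by rewrite finite_setU; split => //; apply: finite_image; apply: finite_setX => //; exact: ys_fin.
have [n [al [be [hfac hal hbe]]]] := factor (fset_set TT) Pphi.
have ht : tall (fun fg => forall y q, fg.1 y != 0 -> Q q ->
          \sum_k al k (y * q)%g * be k q = phi y) x.
  apply: tall_ys => y q yx Qq.
  rewrite hfac; first by rewrite mulgK.
    by apply: fs_in => //; right; exists (y, q).
  by apply: fs_in => //; left.
have hQ1 : forall q, v.1 q != 0 -> Q q.1 by move=> [a t] H; exists t; left.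
have hQ2 : forall q, v.2 q != 0 -> Q q.1 by move=> [a t] H; exists t; right.
have hdec := commD_decomp fx hQ1 hQ2 ht.
set D := D0 `|` actS x D0.
have fD : finite_set D by rewrite finite_setU; split => //; exact: actS_fin.
set P := fset_set D.
have outD : forall p, p \notin P -> ~ D p by move=> p /(fs_out fD).
have act0 : forall (xi : vec), (forall q, xi q != 0 -> D0 q) ->
    forall p, p \notin P -> act sigma x xi p = 0.
  move=> xi hxi p Hp'; have Hp := outD p Hp'; apply/eqP/negPn/negP => Hn; apply: Hp; right.
  exact: (act_supp hxi Hn).
have s1 : forall k q, (smul2 (be k) v).1 q != 0 -> D0 q.
  by move=> k q; rewrite /smul2 /smul /= => H; left; apply: contra H => /eqP ->; rewrite mulr0.
have s2 : forall k q, (smul2 (be k) v).2 q != 0 -> D0 q.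
  by move=> k q; rewrite /smul2 /smul /= => H; right; apply: contra H => /eqP ->; rewrite mulr0.
have u0 : forall k p, p \notin P -> (commD sigma l x (smul2 (be k) v)).1 p = 0 /\ (commD sigma l x (smul2 (be k) v)).2 p = 0.
  move=> k p Hp; rewrite commD1E commD2E.
  rewrite (act0 _ (s2 k)) // (act0 (Dplus l (smul2 (be k) v).2)) //;
    last by move=> q Hq; apply: (s2 k); apply: contra Hq; rewrite /Dplus => /eqP ->; rewrite mulr0.
  rewrite (act0 _ (s1 k)) // (act0 (Dminus l (smul2 (be k) v).1)) //;
    last by move=> q Hq; apply: (s1 k); apply: contra Hq; rewrite /Dminus => /eqP ->; rewrite mulr0.
  by rewrite !mulr0 subr0.
have v0 : forall p, p \notin P -> v.1 p = 0 /\ v.2 p = 0.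
  move=> p Hp'; have Hp := outD p Hp'; split; apply/eqP/negPn/negP => Hn; apply: Hp; left.
    by left.
  by right.
have sv0 : forall k p, p \notin P -> (smul2 (be k) v).1 p = 0 /\ (smul2 (be k) v).2 p = 0.
  by move=> k p /v0 [h1 h2]; rewrite /smul2 /smul /= h1 h2 !mulr0.
have w0 : forall p, p \notin P ->
    (commD sigma l (xt phi x) v).1 p = 0 /\ (commD sigma l (xt phi x) v).2 p = 0.
  move=> p Hp; have [-> ->] := hdec p; split; apply: big1 => k _;
  by have [h1 h2] := u0 k p Hp; rewrite ?h1 ?h2 mulr0.
rewrite (ns_seq w0).
apply: (@le_trans _ _ (\sum_(p <- P) \sum_k
      (cabs ((commD sigma l x (smul2 (be k) v)).1 p) ^+ 2 + cabs ((commD sigma l x (smul2 (be k) v)).2 p) ^+ 2))).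
  apply: ler_sum => p _; have [-> ->] := hdec p.
  rewrite big_split /=; apply: lerD; exact: cs_bound.
rewrite exchange_big /=.
apply: (@le_trans _ _ (\sum_k ns (smul2 (be k) v))).
  apply: ler_sum => k _; rewrite -(ns_seq (u0 k)); apply: Hx.
  split.
    by apply: (sub_finite_set _ fv1) => q /=; rewrite /smul => H; apply: contra H => /eqP ->; rewrite mulr0.
  by apply: (sub_finite_set _ fv2) => q /=; rewrite /smul => H; apply: contra H => /eqP ->; rewrite mulr0.
under eq_bigr => k _ do rewrite (ns_seq (sv0 k)).
rewrite (ns_seq v0) exchange_big /=; apply: ler_sum => p _.
rewrite (eq_bigr (fun k => cabs (be k p.1) ^+ 2 * (cabs (v.1 p) ^+ 2 + cabs (v.2 p) ^+ 2)));
  last by move=> k _; rewrite /smul2 /smul /= !cabsM !exprMn mulrDr.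
rewrite -mulr_suml; apply: ler_piMl => //.
by apply: addr_ge0; exact: sqr_ge0.
Qed.

Definition scale2 (c : C) (v : vec2 R G) : vec2 R G :=
  ((fun p => c * v.1 p), (fun p => c * v.2 p)).

Lemma Dplus_scale c (xi : vec) : Dplus l (fun q => c * xi q) = fun q => c * Dplus l xi q.
Proof. by apply: funext => q; rewrite /Dplus; ring. Qed.

Lemma Dminus_scale c (xi : vec) : Dminus l (fun q => c * xi q) = fun q => c * Dminus l xi q.
Proof. by apply: funext => q; rewrite /Dminus; ring. Qed.

Lemma ns_scale c (u w : vec2 R G) :
  (forall p, u.1 p = c * w.1 p /\ u.2 p = c * w.2 p) -> ns u = cabs c ^+ 2 * ns w.
Proof.
move=> H; rewrite /ns mulr_fsumr; apply: eq_fsbigr => p _.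
by have [-> ->] := H p; rewrite !cabsM !exprMn mulrDr.
Qed.

Lemma commD_scale x c w p :
  (commD sigma l x (scale2 c w)).1 p = c * (commD sigma l x w).1 p /\
  (commD sigma l x (scale2 c w)).2 p = c * (commD sigma l x w).2 p.
Proof.
rewrite !commD1E !commD2E /scale2 /= Dplus_scale Dminus_scale !act_scale.
by split; ring.
Qed.

Lemma norm2_scale (r : R) w : 0 <= r -> norm2 (scale2 (r%:C)%C w) = r * norm2 w.
Proof.
move=> r0; rewrite !norm2_ns (@ns_scale (r%:C)%C _ w) //.
by rewrite sqrtrM ?sqr_ge0 // sqrtr_sqr cabs_real normr_id ger0_norm.
Qed.

Lemma Lip_bound x : (Lip sigma l x <= 1%:E)%E ->
  forall w, fin_vec2 w -> ns (commD sigma l x w) <= ns w.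
Proof.
move=> Hl.
have H1 : forall w, fin_vec2 w -> norm2 w <= 1 -> norm2 (commD sigma l x w) <= 1.
  move=> w fw nw; rewrite -lee_fin; apply: le_trans Hl.
  by apply: ereal_sup_ubound; exists w.
have H2 : forall w, fin_vec2 w -> norm2 (commD sigma l x w) <= norm2 w.
  move=> w [fw1 fw2]; apply/ler_addgt0Pr => e e0.
  set c0 := norm2 w + e.
  have c0p : 0 < c0 by rewrite /c0 ltr_wpDl // norm2_ns sqrtr_ge0.
  have ic0 : 0 <= c0^-1 by rewrite invr_ge0 ltW.
  have fw' : fin_vec2 (scale2 (c0^-1%:C)%C w).
    split.
      by apply: (sub_finite_set _ fw1) => q /=; apply: contra => /eqP ->; rewrite mulr0.
    by apply: (sub_finite_set _ fw2) => q /=; apply: contra => /eqP ->; rewrite mulr0.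
  have nw' : norm2 (scale2 (c0^-1%:C)%C w) <= 1.
    rewrite norm2_scale // ler_pdivrMl // mulr1 /c0 lerDl ltW //.
  have := H1 _ fw' nw'.
  rewrite !norm2_ns (@ns_scale (c0^-1%:C)%C _ (commD sigma l x w)); last first.
    by move=> p; exact: commD_scale.
  rewrite sqrtrM ?sqr_ge0 // sqrtr_sqr cabs_real normr_id ger0_norm //.
  by rewrite ler_pdivrMl // mulr1.
move=> w fw; have := H2 w fw; rewrite !norm2_ns ler_sqrt //; exact: ns_ge0.
Qed.

Lemma tens_fin_xt phi x : tens_fin x -> tens_fin (xt phi x).
Proof.
elim: x => [|fg x IH] //= [[f1 f2] fx]; split; last exact: IH.
split => //; apply: (sub_finite_set _ f1) => y /=.
by rewrite /Mphi; apply: contra => /eqP ->; rewrite mulr0.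
Qed.

Lemma Lip_xt x phi : tens_fin x -> P1 phi -> (Lip sigma l x <= 1%:E)%E ->
  (Lip sigma l (xt phi x) <= 1%:E)%E.
Proof.
move=> fx Pphi Hl; apply: ge_ereal_sup => _ [v [fv nv] <-].
rewrite lee_fin; apply: le_trans nv; rewrite !norm2_ns; apply: ler_wsqrtr.
exact: key fx Pphi fv (Lip_bound Hl).
Qed.

Lemma omega_comp1 a b x :
  omega sigma (Mphi a \o Mphi b) x = omega sigma (Mphi b) (xt a x).
Proof.
rewrite /omega /xt big_map; apply: eq_bigr => fg _ /=.
have -> : Mphi a (Mphi b fg.1) = Mphi b (Mphi a fg.1).
  by apply: funext => g; rewrite /Mphi; ring.
by [].
Qed.

Lemma omega_comp2 a b x :
  omega sigma (Mphi a \o Mphi b) x = omega sigma (Mphi a) (xt b x).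
Proof. by rewrite /omega /xt big_map. Qed.

End Main.

Theorem theorem6p9 (R : realType) (G : groupType) (l : G -> R)
    (sigma : G -> G -> R[i]) (phi1 phi2 phi3 phi4 : G -> R[i]) :
  countable_group G ->
  amenable_group R G ->
  length_function l -> proper_length l ->
  normalized_2cocycle sigma ->
  P1 phi1 -> P1 phi2 -> P1 phi3 -> P1 phi4 ->
  (Delta sigma l (Mphi phi1 \o Mphi phi2) (Mphi phi3 \o Mphi phi4)
     <= Delta sigma l (Mphi phi1) (Mphi phi3) + Delta sigma l (Mphi phi2) (Mphi phi4))%E.
Proof.
move=> _ _ _ _ _ hP1 hP2 hP3 hP4.
apply: ge_ereal_sup => _ [x [fx Lx] <-].
set a := omega sigma (Mphi phi1 \o Mphi phi2) x.
set b := omega sigma (Mphi phi1 \o Mphi phi4) x.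
set c := omega sigma (Mphi phi3 \o Mphi phi4) x.
have hab : ((cabs (a - b))%:E <= Delta sigma l (Mphi phi2) (Mphi phi4))%E.
  apply: ereal_sup_ubound; exists (xt phi1 x).
    by split; [exact: tens_fin_xt | exact: Lip_xt].
  by rewrite /a /b !omega_comp1.
have hbc : ((cabs (b - c))%:E <= Delta sigma l (Mphi phi1) (Mphi phi3))%E.
  apply: ereal_sup_ubound; exists (xt phi4 x).
    by split; [exact: tens_fin_xt | exact: Lip_xt].
  by rewrite /b /c !omega_comp2.
apply: le_trans (leeD hbc hab).
rewrite -EFinD lee_fin.
have -> : a - c = (b - c) + (a - b) by ring.
exact: cabsD.
Qed.
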